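(* Let $A=\{(x_k,y_k):k\in[\ell]\}\subset\mathbb N^d$ be finite, $d=m+n$. Then for all $\bar k\in[\ell]$: (a) $\mathbb D_{\mathrm{in}}(x_{\bar k},y_{\bar k},T_{\mathbb Q_\infty,V}(A))=\mathbb D_{\mathrm{in}}(x_{\bar k},y_{\bar k},Z_{\mathbb Q_\infty,V}(A))$; (b) $\mathbb D_{\mathrm{in}}(x_{\bar k},y_{\bar k},T_{\mathbb Q_\infty,C}(A))=\mathbb D_{\mathrm{in}}(x_{\bar k},y_{\bar k},Z_{\mathbb Q_\infty,C}(A))$; (c) $\mathbb D_{\mathrm{out}}(x_{\bar k},y_{\bar k},T_{\mathbb Q_\infty,V}(A))=\mathbb D_{\mathrm{out}}(x_{\bar k},y_{\bar k},Z_{\mathbb Q_\infty,V}(A))$; (d) $\mathbb D_{\mathrm{out}}(x_{\bar k},y_{\bar k},T_{\mathbb Q_\infty,C}(A))=\mathbb D_{\mathrm{out}}(x_{\bar k},y_{\bar k},Z_{\mathbb Q_\infty,C}(A))$.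
   Context: $\mathbb N$ is the set of non-negative integers; $[\ell]=\{1,\dots,\ell\}$; $1\!\!1$ denotes a vector of ones; $\vee$ is componentwise max. Max-Plus technologies: $T_{\mathbb Q_\infty,V}(A)=\{(x,y)\in\mathbb{R}_+^d: x\ge\bigvee_k(t_k1\!\!1_m+x_k),\ y\le\bigvee_k(t_k1\!\!1_n+y_k),\ \max_k t_k=0,\ t\in(\mathbb{R}\cup\{-\infty\})^\ell\}$, and $T_{\mathbb Q_\infty,C}(A)$ is the same without the constraint $\max_k t_k=0$. Discrete versions: $Z_{\mathbb Q_\infty,V}(A)=T_{\mathbb Q_\infty,V}(A)\cap\mathbb N^d$, $Z_{\mathbb Q_\infty,C}(A)=T_{\mathbb Q_\infty,C}(A)\cap\mathbb N^d$. Translation distance functions: $\mathbb D_{\mathrm{in}}(x,y,T)=\sup\{\delta\in\mathbb{R}:(x-\delta1\!\!1_m,y)\in T\}$, $\mathbb D_{\mathrm{out}}(x,y,T)=\sup\{\delta\in\mathbb{R}:(x,y+\delta1\!\!1_n)\in T\}$. *)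

(* Defs.v *)
From HB Require Import structures.
From mathcomp Require Import all_boot all_order all_algebra.
From mathcomp Require Import all_classical all_reals ereal.
Set Implicit Arguments. Unset Strict Implicit. Unset Printing Implicit Defensive.
Import Order.TTheory GRing.Theory Num.Theory.
Local Open Scope ring_scope.
Local Open Scope classical_set_scope.

(* Data: l points (x_k, y_k) in N^m x N^n, given as X k i and Y k j.
   A scalar t_k in R U {-oo} is an option R (None = -oo). *)
Section Defs.
Variables (R : realType) (m n l : nat).
Variables (X : 'I_l -> 'I_m -> nat) (Y : 'I_l -> 'I_n -> nat).

Definition point := (('I_m -> R) * ('I_n -> R))%type.

(* core Max-Plus constraints:
   x >= \/_k (t_k 1_m + x_k)  and  y <= \/_k (t_k 1_n + y_k), componentwise,
   with -oo terms dropping out of the max (max of nothing = -oo). *)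
Definition maxplus_core (t : 'I_l -> option R) (p : point) : Prop :=
  (forall i, (0 <= p.1 i)) /\ (forall j, (0 <= p.2 j)) /\
  (forall (k : 'I_l) (s : R) (i : 'I_m), t k = Some s -> s + (X k i)%:R <= p.1 i) /\
  (forall j : 'I_n, exists (k : 'I_l) (s : R), t k = Some s /\ p.2 j <= s + (Y k j)%:R).

Definition max_is_zero (t : 'I_l -> option R) : Prop :=
  (exists k, t k = Some 0) /\ (forall k s, t k = Some s -> s <= 0).

Definition T_V : set point :=
  [set p | exists t, maxplus_core t p /\ max_is_zero t].
Definition T_C : set point :=
  [set p | exists t, maxplus_core t p].

Definition is_natR (r : R) : Prop := exists k : nat, r = k%:R.

Definition discretize (T : set point) : set point :=
  [set p | T p /\ (forall i, is_natR (p.1 i)) /\ (forall j, is_natR (p.2 j))].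

Definition Z_V := discretize T_V.
Definition Z_C := discretize T_C.
End Defs.

Definition D_in (R : realType) (m n : nat) (x : 'I_m -> R) (y : 'I_n -> R)
  (T : set (point R m n)) : \bar R :=
  ereal_sup [set (d%:E)%E | d in [set d : R | T ((fun i => x i - d), y)]].

Definition D_out (R : realType) (m n : nat) (x : 'I_m -> R) (y : 'I_n -> R)
  (T : set (point R m n)) : \bar R :=
  ereal_sup [set (d%:E)%E | d in [set d : R | T (x, (fun j => y j + d))]].

(* Main.v *)
Require Import Defs.
From HB Require Import structures.
From mathcomp Require Import all_boot all_order all_algebra.
From mathcomp Require Import all_classical all_reals ereal.
From mathcomp Require Import zify ring lra.
Set Implicit Arguments. Unset Strict Implicit. Unset Printing Implicit Defensive.
Import Order.TTheory GRing.Theory Num.Theory.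
Local Open Scope ring_scope.
Local Open Scope classical_set_scope.

Section Aux.
Variable R : realType.

Lemma natz (p : nat) : (p%:R : R) = (p%:Z)%:~R.
Proof. by rewrite pmulrn. Qed.

Lemma sup_eq (A B : set R) : B `<=` A ->
  (forall d, A d -> exists2 d', B d' & d <= d') ->
  ereal_sup [set (d%:E)%E | d in A] = ereal_sup [set (d%:E)%E | d in B].
Proof.
move=> sub H; apply/eqP; rewrite eq_le; apply/andP; split.
- apply: ge_ereal_sup => _ [d Ad <-].
  have [d' Bd' le] := H d Ad.
  apply: le_ereal_sup_tmp; exists (d'%:E)%E; first by exists d'.
  by rewrite lee_fin.
- by apply: ereal_sup_le => _ [d Bd <-]; exists d => //; exact: sub.
Qed.

Lemma L1 (p q : nat) (s d : R) : s + q%:R <= p%:R - d ->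
  (Num.floor s)%:~R + q%:R <= p%:R - ((Num.ceil d)%:~R : R).
Proof.
move=> h.
have h1 : d <= (p%:Z - q%:Z - Num.floor s)%:~R.
  rewrite !intrD !intrN -!natz; have := floor_le s; lra.
rewrite -ceil_le_int in h1.
have h2 : (Num.floor s + Num.ceil d <= p%:Z - q%:Z)%R by lra.
rewrite -(ler_int R) !intrD !intrN -!natz in h2; lra.
Qed.

Lemma L2 (p q : nat) (s : R) : p%:R <= s + q%:R ->
  (p%:R : R) <= (Num.floor s)%:~R + q%:R.
Proof.
move=> h.
have h1 : ((p%:Z - q%:Z)%:~R : R) <= s by rewrite intrD intrN -!natz; lra.
rewrite -floor_ge_int in h1.
have h2 : (p%:Z <= Num.floor s + q%:Z)%R by lra.
by rewrite -(ler_int R) !intrD -!natz in h2.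
Qed.

Lemma L3 (p q : nat) (s : R) : s + q%:R <= p%:R ->
  (Num.ceil s)%:~R + q%:R <= (p%:R : R).
Proof.
move=> h.
have h1 : s <= ((p%:Z - q%:Z)%:~R : R) by rewrite intrD intrN -!natz; lra.
rewrite -ceil_le_int in h1.
have h2 : (Num.ceil s + q%:Z <= p%:Z)%R by lra.
by rewrite -(ler_int R) !intrD -!natz in h2.
Qed.

Lemma L4 (p q : nat) (s d : R) : p%:R + d <= s + q%:R ->
  (p%:R : R) + (Num.ceil d)%:~R <= (Num.ceil s)%:~R + q%:R.
Proof.
move=> h.
have h1 : d <= ((Num.ceil s - p%:Z + q%:Z)%:~R : R).
  rewrite !intrD intrN -!natz; have := ceil_ge s; lra.
rewrite -ceil_le_int in h1.
have h2 : (p%:Z + Num.ceil d <= Num.ceil s + q%:Z)%R by lra.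
by rewrite -(ler_int R) !intrD -!natz in h2.
Qed.

Lemma natR_int (z : int) : 0 <= (z%:~R : R) -> is_natR (z%:~R : R).
Proof.
move=> h; have : (z%:~R : R) \is a Num.nat.
  by rewrite -intrEge0 // intr_int.
by move/natrP => [k ->]; exists k.
Qed.

End Aux.

Theorem mainTheorem7 (R : realType) (m n l : nat)
  (X : 'I_l -> 'I_m -> nat) (Y : 'I_l -> 'I_n -> nat) (kb : 'I_l) :
  let xk := fun i : 'I_m => ((X kb i)%:R : R) in
  let yk := fun j : 'I_n => ((Y kb j)%:R : R) in
  [/\ D_in xk yk (@T_V R _ _ _ X Y) = D_in xk yk (@Z_V R _ _ _ X Y),
      D_in xk yk (@T_C R _ _ _ X Y) = D_in xk yk (@Z_C R _ _ _ X Y),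
      D_out xk yk (@T_V R _ _ _ X Y) = D_out xk yk (@Z_V R _ _ _ X Y) &
      D_out xk yk (@T_C R _ _ _ X Y) = D_out xk yk (@Z_C R _ _ _ X Y)].
Proof.
move=> xk yk.
pose fl := fun t : 'I_l -> option R => fun k => omap (fun s => (Num.floor s)%:~R : R) (t k).
pose cl := fun t : 'I_l -> option R => fun k => omap (fun s => (Num.ceil s)%:~R : R) (t k).
have core_in : forall t d, maxplus_core X Y t ((fun i => xk i - d), yk) ->
   maxplus_core X Y (fl t) ((fun i => xk i - (Num.ceil d)%:~R), yk) /\
   (forall i, is_natR (xk i - (Num.ceil d)%:~R)) /\ (forall j, is_natR (yk j)).
  move=> t d [/= h1 [h2 [h3 h4]]].
  have hx : forall i, 0 <= xk i - (Num.ceil d)%:~R.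
    move=> i; have := h1 i; rewrite /xk => hi.
    have : d <= ((X kb i)%:Z)%:~R by rewrite -natz; lra.
    rewrite -ceil_le_int -(ler_int R) -natz; lra.
  split; last split.
  - split => //; split => //; split.
    + move=> k s i; rewrite /fl; case E: (t k) => [s0|] //= [<-].
      by move: (h3 _ _ i E); rewrite /xk; exact: L1.
    + move=> j; have [k [s [E hs]]] := h4 j.
      exists k, (Num.floor s)%:~R; split; first by rewrite /fl E.
      by move: hs; rewrite /yk; exact: L2.
  - move=> i; have := hx i; rewrite /xk natz -intrB; exact: natR_int.
  - by move=> j; exists (Y kb j).
have core_out : forall t d, maxplus_core X Y t (xk, (fun j => yk j + d)) ->
   maxplus_core X Y (cl t) (xk, (fun j => yk j + (Num.ceil d)%:~R)) /\
   (forall i, is_natR (xk i)) /\ (forall j, is_natR (yk j + (Num.ceil d)%:~R)).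
  move=> t d [/= h1 [h2 [h3 h4]]].
  have hy : forall j, 0 <= yk j + (Num.ceil d)%:~R.
    move=> j; have := h2 j; have := ceil_ge d; lra.
  split; last split.
  - split => //; split => //; split.
    + move=> k s i; rewrite /cl; case E: (t k) => [s0|] //= [<-].
      by move: (h3 _ _ i E); rewrite /xk; exact: L3.
    + move=> j; have [k [s [E hs]]] := h4 j.
      exists k, (Num.ceil s)%:~R; split; first by rewrite /cl E.
      by move: hs; rewrite /yk; exact: L4.
  - by move=> i; exists (X kb i).
  - move=> j; have := hy j; rewrite /yk natz -intrD; exact: natR_int.
have mz_fl : forall t, max_is_zero t -> max_is_zero (fl t).
  move=> t [[k Ek] h]; split.
    by exists k; rewrite /fl Ek /= floor0.
  move=> k' s; rewrite /fl; case E: (t k') => [s0|] //= [<-].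
  have := h _ _ E; have := floor_le s0; lra.
have mz_cl : forall t, max_is_zero t -> max_is_zero (cl t).
  move=> t [[k Ek] h]; split.
    by exists k; rewrite /cl Ek /= ceil0.
  move=> k' s; rewrite /cl; case E: (t k') => [s0|] //= [<-].
  by rewrite lerz0 ceil_le0; exact: h _ _ E.
split; rewrite /D_in /D_out; apply: sup_eq.
- by move=> d [].
- move=> d [t [hc hz]]; exists (Num.ceil d)%:~R; last exact: ceil_ge.
  have [A [B C]] := core_in t d hc.
  rewrite /Z_V /discretize /T_V /=; split; last by split; [exact: B | exact: C].
  by exists (fl t); split; [exact: A | exact: (mz_fl _ hz)].
- by move=> d [].
- move=> d [t hc]; exists (Num.ceil d)%:~R; last exact: ceil_ge.
  have [A [B C]] := core_in t d hc.
  rewrite /Z_C /discretize /T_C /=; split; last by split; [exact: B | exact: C].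
  by exists (fl t); exact: A.
- by move=> d [].
- move=> d [t [hc hz]]; exists (Num.ceil d)%:~R; last exact: ceil_ge.
  have [A [B C]] := core_out t d hc.
  rewrite /Z_V /discretize /T_V /=; split; last by split; [exact: B | exact: C].
  by exists (cl t); split; [exact: A | exact: (mz_cl _ hz)].
- by move=> d [].
- move=> d [t hc]; exists (Num.ceil d)%:~R; last exact: ceil_ge.
  have [A [B C]] := core_out t d hc.
  rewrite /Z_C /discretize /T_C /=; split; last by split; [exact: B | exact: C].
  by exists (cl t); exact: A.
Qed.
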